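(* The admissible, complete, preferred and grounded semantics of fuzzy argumentation frameworks are SCC-recursive, characterized respectively by the following base functions (defined for fuzzy argumentation frameworks $FAF$ with $|SCCS_{FAF}|=1$ and $C\subseteq\mathcal A$): $\mathcal{BF}_{\mathcal{AE}}(FAF,C)=\mathcal{AE}(FAF,C)$; $\mathcal{BF}_{\mathcal{CO}}(FAF,C)=\mathcal{CE}(FAF,C)$; $\mathcal{BF}_{\mathcal{PE}}(FAF,C)=\mathcal{PE}(FAF,C)$; $\mathcal{BF}_{\mathcal{GR}}(FAF,C)=\{GE(FAF,C)\}$. That is, for every fuzzy argumentation framework $FAF=\langle\mathcal A,\rho\rangle$: $\mathcal{AE}(FAF)=\mathcal{GF}_{\mathcal{AE}}(FAF,\mathcal A)$, $\mathcal{CE}(FAF,\mathcal A)=\mathcal{GF}_{\mathcal{CO}}(FAF,\mathcal A)$, $\mathcal{PE}(FAF,\mathcal A)=\mathcal{GF}_{\mathcal{PE}}(FAF,\mathcal A)$, $\{GE(FAF,\mathcal A)\}=\mathcal{GF}_{\mathcal{GR}}(FAF,\mathcal A)$, where $\mathcal{GF}_{\mathcal S}$ is built from the base function $\mathcal{BF}_{\mathcal S}$.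
   Context: Fuzzy sets: a fuzzy set on a crisp set $X$ is a map $S:X\to[0,1]$; $S\subseteq S'$ means $S(x)\le S'(x)$ for all $x$; $\cap,\cup$ are pointwise $\min,\max$; $\mathrm{Supp}(S)=\{x:S(x)>0\}$. A fuzzy point $(x,a)$, $a\in(0,1]$, has value $a$ at $x$ and $0$ elsewhere; $(x,a)\in S$ means $a\le S(x)$. $a*b=\min\{a,b\}$. A fuzzy argumentation framework (FAF) is $\langle\mathcal A,\rho\rangle$ with $\mathrm{Args}$ a crisp set, $\mathcal A$ a fuzzy set on $\mathrm{Args}$, $\rho:\mathrm{Args}\times\mathrm{Args}\to[0,1]$, $\rho_{AB}=\rho(A,B)$; $A$ attacks $B$ iff $\rho_{AB}>0$. Fuzzy arguments are fuzzy points $(A,a)\in\mathcal A$. An attack of $(A,a)$ on $(B,b)$ is tolerable if $\min\{a,\rho_{AB}\}+b\le1$, sufficient otherwise. $(A,a)$ weakens $(B,b)$ to $(B,b')$, $b'=\min\{1-\min\{a,\rho_{AB}\},b\}$. $T\subseteq\mathcal A$ weakening defends $(C,c)$ if for every fuzzy argument $(B,b)$ sufficiently attacking $(C,c)$ there is $(A',a')\in T$ weakening $(B,b)$ to some $(B,b')$ which tolerably attacks $(C,c)$. $T$ is conflict-free if no $(A,a),(B,b)\in T$ with $(A,a)$ sufficiently attacking $(B,b)$; admissible if conflict-free and it weakening defends every element of $T$; $\mathcal{AE}(FAF)$ is the set of admissible sets. For $C\subseteq\mathcal A$: $\mathcal{AE}(FAF,C)$ is the set of admissible $E\subseteq C$;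 $\mathcal{CE}(FAF,C)$ is the set of $E\in\mathcal{AE}(FAF,C)$ such that every fuzzy argument $(A,a)\in C$ weakening defended by $E$ lies in $E$; $\mathcal{PE}(FAF,C)$ is the set of $\subseteq$-maximal elements of $\mathcal{AE}(FAF,C)$; $F_{FAF,C}(T)$ is the union of all fuzzy arguments $(A,a)\in C$ weakening defended by $T$, and $GE(FAF,C)$ is the least fixed point of $F_{FAF,C}$. (With $C=\mathcal A$ these are the complete, preferred and grounded extensions of $FAF$.) Path-equivalence on $\mathrm{Args}$: $A\sim B$ iff $A=B$ or there are chains of attacks from $A$ to $B$ and from $B$ to $A$. $SCC_{FAF}(A)$ is the fuzzy set with value $\mathcal A(B)$ at each $B\sim A$, $0$ elsewhere; $SCCS_{FAF}$ is the set of these. $outparents_{FAF}(S)$ is the fuzzy set of $(B,\mathcal A(B))$ with $B\notin\mathrm{Supp}(S)$ attacking some argument of $\mathrm{Supp}(S)$. For $T\subseteq\mathcal A$, $FAF\downarrow_T=\langle T,\rho|_{\mathrm{Supp}(T)\times\mathrm{Supp}(T)}\rangle$, and notions in $FAF\downarrow_T$ refer to its own fuzzy arguments and attacks. For $E\subseteq\mathcal A$, $S\in SCCS_{FAF}$: $L_{FAF}(S,E)(A)=\max_B\big((E\cap outparents_{FAF}(S))(B)*\rho_{BA}\big)$ for $A\in\mathrm{Supp}(S)$, $0$ elsewhere; $R_{FAF}(S,E)(A)=\min\{\mathcal A(A),1-L_{FAF}(S,E)(A)\}$ for $A\in\mathrm{Supp}(S)$, $0$ elsewhere; $D_{FAF}(S,E)$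 is the union of fuzzy points $(A,a)\in R_{FAF}(S,E)$ such that for every $(B,b)\in outparents_{FAF}(S)$ sufficiently attacking $(A,a)$ there is $(C,c)\in E$ weakening $(B,b)$ to some $(B,b')$ which tolerably attacks $(A,a)$. SCC-recursiveness: given a base function $\mathcal{BF}_{\mathcal S}$ assigning to each FAF with $|SCCS_{FAF}|=1$ and each $C\subseteq\mathcal A$ a set of fuzzy subsets of $\mathcal A$, define recursively for any FAF and $C\subseteq\mathcal A$ the set $\mathcal{GF}_{\mathcal S}(FAF,C)$: a fuzzy set $E\subseteq\mathcal A$ belongs to it iff either $|SCCS_{FAF}|=1$ and $E\in\mathcal{BF}_{\mathcal S}(FAF,C)$, or $|SCCS_{FAF}|\neq1$ and for every $S\in SCCS_{FAF}$, $E\cap S\in\mathcal{GF}_{\mathcal S}(FAF\downarrow_{R_{FAF}(S,E)},D_{FAF}(S,E)\cap C)$. A semantics assigning to each FAF a set of extensions $\mathcal E_{\mathcal S}(FAF)$ is SCC-recursive (with base function $\mathcal{BF}_{\mathcal S}$) iff $\mathcal E_{\mathcal S}(FAF)=\mathcal{GF}_{\mathcal S}(FAF,\mathcal A)$ for every FAF $\langle\mathcal A,\rho\rangle$. *)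

(* Defs.v *)
(* fuzzy values live in an abstract R : realType (complete
   ordered field, so unions of fuzzy points = suprema exist). *)
From HB Require Import structures.
From mathcomp Require Import all_boot all_order all_algebra.
From mathcomp Require Import classical_sets reals.
Set Implicit Arguments. Unset Strict Implicit. Unset Printing Implicit Defensive.
Import Order.TTheory GRing.Theory Num.Theory.
Local Open Scope ring_scope.
Local Open Scope classical_set_scope.

Section FAF.
Variables (R : realType) (U : finType).

Definition fz := U -> R.

Record faf := MkFAF { args : {set U}; fA : fz; frho : U -> U -> R }.

Definition fle (S S' : fz) := forall x, S x <= S' x.
Definition fsub (E S : fz) := forall x, 0 <= E x /\ E x <= S x.
Definition fcap (S S' : fz) : fz := fun x => Num.min (S x) (S' x).
Definition supp (S : fz) : {set U} := [set x | 0 < S x].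

Definition fpt_in (S : fz) (x : U) (a : R) := 0 < a /\ a <= 1 /\ a <= S x.

Definition fz_union (P : U -> R -> Prop) : fz :=
  fun x => sup [set a | 0 < a /\ a <= 1 /\ P x a].

Section Sem.
Variable F : faf.
Let rho := frho F.

Definition suff_att (A : U) (a : R) (B : U) (b : R) :=
  0 < rho A B /\ 1 < Num.min a (rho A B) + b.
Definition tol_att (A : U) (a : R) (B : U) (b : R) :=
  0 < rho A B /\ Num.min a (rho A B) + b <= 1.
Definition weaken (A : U) (a : R) (B : U) (b : R) :=
  Num.min (1 - Num.min a (rho A B)) b.

Definition wdefends (T : fz) (C : U) (c : R) :=
  forall B b, fpt_in (fA F) B b -> suff_att B b C c ->
    exists A' a', fpt_in T A' a' /\ tol_att B (weaken A' a' B b) C c.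

Definition conflict_free (T : fz) :=
  ~ (exists A a B b, fpt_in T A a /\ fpt_in T B b /\ suff_att A a B b).

Definition admissible (T : fz) :=
  fsub T (fA F) /\ conflict_free T /\
  forall C c, fpt_in T C c -> wdefends T C c.

Definition AE : set fz := [set T | admissible T].
Definition AEC (C : fz) : set fz := [set E | admissible E /\ fsub E C].
Definition CEC (C : fz) : set fz :=
  [set E | AEC C E /\ forall x a, fpt_in C x a -> wdefends E x a -> fpt_in E x a].
Definition PEC (C : fz) : set fz :=
  [set E | AEC C E /\ forall E', AEC C E' -> fle E E' -> E' = E].
Definition Fop (C : fz) (T : fz) : fz :=
  fz_union (fun x a => a <= C x /\ wdefends T x a).
Definition lfp_set (G : fz -> fz) : set fz :=
  [set X | G X = X /\ forall Y, G Y = Y -> fle X Y].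
Definition GEset (C : fz) : set fz := lfp_set (Fop C).

Definition att_rel : rel U :=
  fun x y => [&& x \in args F, y \in args F & 0 < rho x y].
Definition peq (A B : U) := (A == B) || (connect att_rel A B && connect att_rel B A).
Definition SCC (A : U) : fz := fun B => if (B \in args F) && peq A B then fA F B else 0.
Definition SCCS : set fz := [set S | exists2 A, A \in args F & S = SCC A].

Definition outparents (S : fz) : fz := fun B =>
  if [&& B \in args F, B \notin supp S & [exists C, (C \in supp S) && (0 < rho B C)]]
  then fA F B else 0.

Definition Lfz (S E : fz) : fz := fun A =>
  if A \in supp S then
    \big[Num.max/0]_(B : U) Num.min (fcap E (outparents S) B) (rho B A)
  else 0.
Definition Rfz (S E : fz) : fz := fun A =>
  if A \in supp S then Num.min (fA F A) (1 - Lfz S E A) else 0.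
Definition Dfz (S E : fz) : fz :=
  fz_union (fun A a => a <= Rfz S E A /\
    forall B b, fpt_in (outparents S) B b -> suff_att B b A a ->
      exists C c, fpt_in E C c /\ tol_att B (weaken C c B b) A a).
End Sem.

Definition restr (F : faf) (T : fz) : faf :=
  MkFAF (supp T) T
    (fun x y => if (x \in supp T) && (y \in supp T) then frho F x y else 0).

Definition single (P : set fz) := exists S, P = [set S].

(* SCC-recursive scheme GF_S with base function BF, by recursion on a fuel
   n >= #|args F| (sub-frameworks have strictly fewer arguments, so fuel
   #|args F| suffices; fuel 0 only occurs with no arguments, hence no SCCs) *)
Variable BF : faf -> fz -> set fz.
Fixpoint GFn (n : nat) (F : faf) (C : fz) (E : fz) : Prop :=
  fsub E (fA F) /\
  (single (SCCS F) -> BF F C E) /\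
  (~ single (SCCS F) ->
     forall S, SCCS F S ->
       match n with
       | 0 => False
       | n'.+1 => GFn n' (restr F (Rfz F S E)) (fcap (Dfz F S E) C) (fcap E S)
       end).
Definition GF (F : faf) (C : fz) : set fz := [set E | GFn #|args F| F C E].
End FAF.

Definition BF_AE (R : realType) (U : finType) (F : faf R U) (C : fz R U) := AEC F C.
Definition BF_CO (R : realType) (U : finType) (F : faf R U) (C : fz R U) := CEC F C.
Definition BF_PE (R : realType) (U : finType) (F : faf R U) (C : fz R U) := PEC F C.
Definition BF_GR (R : realType) (U : finType) (F : faf R U) (C : fz R U) := GEset F C.

(* Main.v *)
Require Import Defs.
From HB Require Import structures.
From mathcomp Require Import all_boot all_order all_algebra.
From mathcomp Require Import boolp classical_sets reals.
From mathcomp Require Import lra.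
Set Implicit Arguments. Unset Strict Implicit. Unset Printing Implicit Defensive.
Import Order.TTheory GRing.Theory Num.Theory.
Local Open Scope ring_scope.
Local Open Scope classical_set_scope.

Ltac mmin t a b := let m := fresh "m" in let h := fresh "hm" in let e := fresh "em" in let e0 := fresh "e0" in
  remember t as m eqn:e0; have [h|h] := leP a b;
  [have e : m = a by rewrite e0 min_l | have e : m = b by rewrite e0 min_r // ltW];
  clear e0.
Ltac mmax t a b := let m := fresh "m" in let h := fresh "hm" in let e := fresh "em" in let e0 := fresh "e0" in
  remember t as m eqn:e0; have [h|h] := leP a b;
  [have e : m = b by rewrite e0 max_r | have e : m = a by rewrite e0 max_l // ltW];
  clear e0.
Ltac mm := repeat match goal with
 | |- context [@Order.min ?d ?T ?a ?b] => mmin (@Order.min d T a b) a b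
 | H : context [@Order.min ?d ?T ?a ?b] |- _ => mmin (@Order.min d T a b) a b
 | |- context [@Order.max ?d ?T ?a ?b] => mmax (@Order.max d T a b) a b
 | H : context [@Order.max ?d ?T ?a ?b] |- _ => mmax (@Order.max d T a b) a b
 end.

Section Gen.
Variables (R : realType) (U : finType).
Implicit Types (G : faf R U) (E T W : fz R U).

Definition DC (P : U -> R -> Prop) := forall x a a', 0 < a' -> a' <= a -> P x a -> P x a'.
Definition LC (P : U -> R -> Prop) := forall x a, 0 < a -> a <= 1 ->
  (forall a', 0 < a' -> a' < a -> P x a') -> P x a.

Lemma union_bounds (P : U -> R -> Prop) (x : U) : 0 <= fz_union P x <= 1.
Proof.
rewrite /fz_union; set E := [set a | _].
case: (pselect (exists y, E y)) => [[y Ey]|nE]; last first.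
  have -> : E = set0 by apply/seteqP; split=> z //= Ez; apply: nE; exists z.
  by rewrite sup0 lexx ler01.
have ub : has_ubound E by exists 1 => z [_ []].
apply/andP; split.
  by apply: le_trans (ub_le_sup ub Ey); case: Ey => /ltW.
by apply: ge_sup; [exists y | move=> z [_ []]].
Qed.

Lemma union_char (P : U -> R -> Prop) (x : U) a : DC P -> LC P -> 0 < a -> a <= 1 ->
  (a <= fz_union P x <-> P x a).
Proof.
move=> hD hL a0 a1; rewrite /fz_union; set E := [set a | _].
have ub : has_ubound E by exists 1 => z [_ []].
split; last by move=> Pa; apply: ub_le_sup.
move=> hs; apply: hL => // a' a'0 a'a.
have ne : E !=set0.
  case: (pselect (exists y, E y)) => // nE.
  have E0 : E = set0 by apply/seteqP; split=> z //= Ez; apply: nE; exists z.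
  by move: hs; rewrite E0 sup0 => /(lt_le_trans a0); rewrite ltxx.
have [y [y0 [y1 Py]] ay] := sup_gt ne (lt_le_trans a'a hs).
by apply: hD Py => //; apply: ltW.
Qed.

Lemma le_char (u v : R) : 0 <= v -> u <= 1 ->
  (forall a, 0 < a -> a <= 1 -> a <= u -> a <= v) -> u <= v.
Proof.
move=> v0 u1 h; have [u0|u0] := leP u 0; first exact: le_trans u0 v0.
exact: h.
Qed.

Lemma eq_char (u v : R) : 0 <= u <= 1 -> 0 <= v <= 1 ->
  (forall a, 0 < a -> a <= 1 -> (a <= u <-> a <= v)) -> u = v.
Proof.
move=> /andP[u0 u1] /andP[v0 v1] h; apply/eqP; rewrite eq_le.
apply/andP; split; apply: le_char => // a a0 a1; by move/(h a a0 a1).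
Qed.

Lemma LC_le (r a : R) : 0 < a -> (forall a', 0 < a' -> a' < a -> a' <= r) -> a <= r.
Proof.
move=> a0 h; rewrite leNgt; apply/negP => ra.
have := h ((a + Num.max r 0) / 2); mm; lra.
Qed.

Lemma DC_and (P Q : U -> R -> Prop) : DC P -> DC Q -> DC (fun x a => P x a /\ Q x a).
Proof. by move=> hP hQ x a a' h0 h1 [p q]; split; [apply: hP p|apply: hQ q]. Qed.

Lemma LC_and (P Q : U -> R -> Prop) : LC P -> LC Q -> LC (fun x a => P x a /\ Q x a).
Proof.
move=> hP hQ x a a0 a1 h; split; [apply: hP|apply: hQ] => // a' h0 h1; by case: (h a' h0 h1).
Qed.

Lemma DC_le (f : U -> R) : DC (fun x a => a <= f x).
Proof. by move=> x a a' _ h1 h2; apply: le_trans h2. Qed.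

Lemma LC_lef (f : U -> R) : LC (fun x a => a <= f x).
Proof. by move=> x a a0 _ h; apply: LC_le. Qed.

Lemma bigmax_ub (f : U -> R) i : f i <= \big[Num.max/0]_(j : U) f j.
Proof.
have : i \in index_enum U by rewrite mem_index_enum.
elim: (index_enum U) => [//|j r IH]; rewrite in_cons big_cons /=.
case/orP => [/eqP ->|/IH h]; first by rewrite le_max lexx.
by rewrite le_max h orbT.
Qed.

Lemma bigmax_le (f : U -> R) v : 0 <= v -> (forall i, f i <= v) -> \big[Num.max/0]_(j : U) f j <= v.
Proof.
move=> v0 h; apply: (big_ind (fun w => w <= v)) => // x y hx hy.
by rewrite ge_max hx hy.
Qed.

Lemma bigmax_att (f : U -> R) :
  (\big[Num.max/0]_(j : U) f j = 0) \/ exists i, \big[Num.max/0]_(j : U) f j = f i.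
Proof.
apply: (big_ind (fun w => w = 0 \/ exists i, w = f i)); first by left.
  move=> x y hx hy; rewrite maxEle; by case: ifP.
by move=> i _; right; exists i.
Qed.

Lemma bigmin_lb (f : U -> R) i : \big[Num.min/1]_(j : U) f j <= f i.
Proof.
have : i \in index_enum U by rewrite mem_index_enum.
elim: (index_enum U) => [//|j r IH]; rewrite in_cons big_cons /=.
case/orP => [/eqP ->|/IH h]; first by rewrite ge_min lexx.
by rewrite ge_min h orbT.
Qed.

Lemma bigmin_pos (f : U -> R) : (forall i, 0 < f i) -> 0 < \big[Num.min/1]_(j : U) f j.
Proof.
move=> h; apply: (big_ind (fun w => 0 < w)) => //=.
all: try (by move=> x y hx hy; rewrite lt_min hx hy).
all: try exact: ltr01.
Qed.

Definition wdef G (Att T : fz R U) x a := forall B b, fpt_in Att B b ->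
  suff_att G B b x a -> exists C c, fpt_in T C c /\ tol_att G B (weaken G C c B b) x a.

Lemma wdefendsE G T x a : wdefends G T x a <-> wdef G (fA G) T x a.
Proof. by []. Qed.

Lemma wdef_DC G Att T : DC (wdef G Att T).
Proof.
move=> x a a' a0 aa h B b hB [r0 hs].
have [|C [c [hC [t0 ht]]]] := h B b hB.
  by split => //; lra.
exists C, c; split => //; split => //; lra.
Qed.

Lemma wdef_mono G Att T T' x a : (forall y, T y <= T' y) -> wdef G Att T x a -> wdef G Att T' x a.
Proof.
move=> hT h B b hB hs; have [C [c [[c0 [c1 cT]] ht]]] := h B b hB hs.
by exists C, c; split => //; split=> //; split => //; apply: le_trans (hT C).
Qed.

Lemma weaken_anti G C c c' B b : c <= c' -> weaken G C c' B b <= weaken G C c B b.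
Proof. by move=> h; rewrite /weaken; mm; lra. Qed.

Lemma wdef_LC G Att T : LC (wdef G Att T).
Proof.
move=> x a a0 a1 h B b hB [r0 hs].
case: (pselect (exists C c, fpt_in T C c /\ tol_att G B (weaken G C c B b) x a)) => // nE.
pose cs C := Num.min (T C) 1.
pose f C := if 0 < T C then Num.min (weaken G C (cs C) B b) (frho G B x) + a - 1 else 1.
have fpos : forall C, 0 < f C.
  move=> C; rewrite /f; case: ifP => // TC.
  rewrite subr_gt0 ltNge; apply/negP => hle; apply: nE; exists C, (cs C).
  split; last by split.
  by rewrite /cs /fpt_in; mm; lra.
pose d := \big[Num.min/1]_(j : U) f j.
have d0 : 0 < d := bigmin_pos fpos.
pose e := Num.min d (Num.min (Num.min b (frho G B x) + a - 1) a).
have e0 : 0 < e.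
  rewrite /e !lt_min d0 a0 /=; move: hs; clear; mm; lra.
have ea : e <= a by rewrite /e !ge_min lexx !orbT.
have h' := h (a - e / 2) ltac:(lra) ltac:(lra).
have [|C [c [[c0 [c1 cT]] [_ ht]]]] := h' B b hB.
  split => //.
  have : e <= Num.min b (frho G B x) + a - 1 by rewrite /e !ge_min lexx !orbT.
  lra.
have TC : 0 < T C by exact: lt_le_trans c0 cT.
have fC := bigmin_lb f C; rewrite -/d /f TC in fC.
have hw := @weaken_anti G C c (cs C) B b (ltac:(rewrite /cs; mm; lra)).
have ed : e <= d by rewrite /e ge_min lexx.
have m1 : Num.min (weaken G C (cs C) B b) (frho G B x) <= Num.min (weaken G C c B b) (frho G B x).
  exact: le_min2 hw (lexx _).
lra.
Qed.

End Gen.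


Section Frame.
Variables (R : realType) (U : finType).
Implicit Types (G : faf R U) (E T W : fz R U).

Record WF G : Prop := {
  wfA0 : forall x, 0 <= fA G x;
  wfA1 : forall x, fA G x <= 1;
  wfr0 : forall x y, 0 <= frho G x y;
  wfr1 : forall x y, frho G x y <= 1;
  wfAa : forall x, 0 < fA G x -> x \in args G;
  wfra : forall x y, 0 < frho G x y -> (x \in args G) && (y \in args G) }.

Variable G : faf R U.
Hypothesis wf : WF G.

Lemma peq_refl s : peq G s s.
Proof. by rewrite /peq eqxx. Qed.

Lemma peq_conn s y : peq G s y -> connect (att_rel G) s y /\ connect (att_rel G) y s.
Proof. by case/orP => [/eqP ->|/andP[]//]; rewrite connect0. Qed.

Lemma peq_of s y : connect (att_rel G) s y -> connect (att_rel G) y s -> peq G s y.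
Proof. by move=> h1 h2; rewrite /peq h1 h2 orbT. Qed.

Lemma peq_sym s y : peq G s y -> peq G y s.
Proof. by case/peq_conn => h1 h2; apply: peq_of. Qed.

Lemma peq_trans s y z : peq G s y -> peq G y z -> peq G s z.
Proof.
case/peq_conn => h1 h2 /peq_conn [h3 h4]; apply: peq_of; exact: connect_trans h1 h3 || exact: connect_trans h4 h2.
Qed.

Lemma att_of x y : 0 < frho G x y -> att_rel G x y.
Proof. by move=> h; rewrite /att_rel h andbT; apply: (wfra wf). Qed.

Lemma supp_E T y : (y \in supp T) = (0 < T y).
Proof. by rewrite /supp inE. Qed.

Lemma supp_SCC s y : (y \in supp (SCC G s)) = [&& y \in args G, peq G s y & 0 < fA G y].
Proof.
rewrite supp_E /SCC; case: ifP => [/andP[-> ->]//| h]; rewrite ltxx.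
by apply/esym/and3P => -[h1 h2 _]; move: h; rewrite h1 h2.
Qed.

Lemma SCC_ge0 s y : 0 <= SCC G s y.
Proof. by rewrite /SCC; case: ifP => // _; apply: (wfA0 wf). Qed.

Lemma SCC_out s y : y \notin supp (SCC G s) -> SCC G s y = 0.
Proof. by rewrite supp_E -leNgt => h; apply/eqP; rewrite eq_le h SCC_ge0. Qed.

Lemma SCC_in s y : y \in supp (SCC G s) -> SCC G s y = fA G y.
Proof. by rewrite supp_SCC /SCC => /and3P[-> -> _]. Qed.

Lemma fcap_SCC W s y : fsub W (fA G) ->
  fcap W (SCC G s) y = if y \in supp (SCC G s) then W y else 0.
Proof.
move=> hW; rewrite /fcap; case: ifP => h.
  by rewrite SCC_in // min_l //; case: (hW y).
by rewrite SCC_out ?h // min_r //; case: (hW y).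
Qed.

Lemma op_val S B : outparents G S B =
  if [&& B \in args G, B \notin supp S & [exists C, (C \in supp S) && (0 < frho G B C)]]
  then fA G B else 0.
Proof. by []. Qed.

Lemma op_le S B : outparents G S B <= fA G B.
Proof. by rewrite op_val; case: ifP => // _; apply: (wfA0 wf). Qed.

Lemma op_ge0 S B : 0 <= outparents G S B.
Proof. by rewrite op_val; case: ifP => // _; apply: (wfA0 wf). Qed.

Lemma op_of S B u : B \notin supp S -> u \in supp S -> 0 < frho G B u ->
  outparents G S B = fA G B.
Proof.
move=> hB hu hr; rewrite op_val hB.
have /andP[-> _] := wfra wf hr; rewrite /=.
by case: existsP => // -[]; exists u; rewrite hu hr.
Qed.

Lemma op_pos S B : 0 < outparents G S B ->
  [/\ B \in args G, B \notin supp S, exists2 u, u \in supp S & 0 < frho G B u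
    & outparents G S B = fA G B].
Proof.
rewrite op_val; case: ifP; last by rewrite ltxx.
by case/and3P => h1 h2 /existsP[u /andP[h3 h4]] _; split => //; exists u.
Qed.

Lemma upstream s B C : 0 < outparents G (SCC G s) B -> 0 < frho G C B ->
  C \notin supp (SCC G s).
Proof.
move=> hop0 hCB; have [hB hBS [u hu hBu] hop] := op_pos hop0.
have hfB : 0 < fA G B by rewrite -hop.
apply/negP => hC; move/negP: hBS; apply.
move: hC hu; rewrite !supp_SCC => /and3P[hCa hsC _] /and3P[hua hsu _].
rewrite hB hfB andbT /=.
have [c1 c2] := peq_conn hsC; have [c3 c4] := peq_conn hsu.
apply: peq_of.
  by apply: connect_trans c1 (connect1 (att_of hCB)).
by apply: connect_trans (connect1 (att_of hBu)) c4.
Qed.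

Lemma L_in S E x : x \in supp S -> Lfz G S E x =
  \big[Num.max/0]_(B : U) Num.min (fcap E (outparents G S) B) (frho G B x).
Proof. by rewrite /Lfz => ->. Qed.

Lemma bigmax_ge0 (f : U -> R) : 0 <= \big[Num.max/0]_(j : U) f j.
Proof. by elim/big_rec: _ => // i w _ hw; rewrite le_max hw orbT. Qed.

Lemma L_ge0 S E x : 0 <= Lfz G S E x.
Proof. by rewrite /Lfz; case: ifP => // _; apply: bigmax_ge0. Qed.

Lemma L_le1 S E x : Lfz G S E x <= 1.
Proof.
rewrite /Lfz; case: ifP => _; last exact: ler01.
apply: bigmax_le; first exact: ler01.
by move=> i; rewrite ge_min (wfr1 wf) orbT.
Qed.

Lemma L_ub S E x B : fsub E (fA G) -> x \in supp S -> B \notin supp S -> 0 < frho G B x ->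
  Num.min (E B) (frho G B x) <= Lfz G S E x.
Proof.
move=> hE hx hB hr; rewrite L_in //.
apply: le_trans (bigmax_ub _ B); rewrite /fcap (op_of hB hx hr).
by rewrite (min_l (proj2 (hE B))).
Qed.

Lemma L_att S E x : fsub E (fA G) -> x \in supp S -> 0 < Lfz G S E x ->
  exists B, [/\ B \notin supp S, 0 < frho G B x, 0 < outparents G S B
    & Lfz G S E x = Num.min (E B) (frho G B x)].
Proof.
move=> hE hx; rewrite (L_in E hx).
case: (bigmax_att (fun B => Num.min (fcap E (outparents G S) B) (frho G B x))) => [->|[B ->]].
  by rewrite ltxx.
rewrite /fcap !lt_min => /andP[/andP[hEB hop] hr].
have [_ hBS _ hopB] := op_pos hop.
exists B; split => //; by rewrite hopB (min_l (proj2 (hE B))).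
Qed.

Lemma R_in S E x : x \in supp S -> Rfz G S E x = Num.min (fA G x) (1 - Lfz G S E x).
Proof. by rewrite /Rfz => ->. Qed.

Lemma R_out S E x : x \notin supp S -> Rfz G S E x = 0.
Proof. by rewrite /Rfz => /negbTE ->. Qed.

Lemma R_ge0 S E x : 0 <= Rfz G S E x.
Proof.
rewrite /Rfz; case: ifP => // _; rewrite le_min (wfA0 wf) /= subr_ge0; exact: L_le1.
Qed.

Lemma R_lefA S E x : Rfz G S E x <= fA G x.
Proof. by rewrite /Rfz; case: ifP => _; [rewrite ge_min lexx | apply: (wfA0 wf)]. Qed.

Lemma R_le1 S E x : Rfz G S E x <= 1.
Proof. exact: le_trans (R_lefA _ _ _) (wfA1 wf x). Qed.

Lemma suppR S E x : x \in supp (Rfz G S E) -> x \in supp S.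
Proof. by rewrite supp_E /Rfz; case: ifP => //; rewrite ltxx. Qed.

Lemma WF_restr T : (forall x, 0 <= T x <= 1) -> WF (restr G T).
Proof.
move=> hT; split => /=.
- by move=> x; case/andP: (hT x).
- by move=> x; case/andP: (hT x).
- by move=> x y; case: ifP => // _; apply: (wfr0 wf).
- by move=> x y; case: ifP => _; [exact: (wfr1 wf) | exact: ler01].
- by move=> x; rewrite supp_E.
- by move=> x y; case: ifP => //; rewrite ltxx.
Qed.

Lemma rho_restr T y z : y \in supp T -> z \in supp T -> frho (restr G T) y z = frho G y z.
Proof. by move=> hy hz /=; rewrite hy hz. Qed.

Lemma suff_restr T B b y a : B \in supp T -> y \in supp T ->
  suff_att (restr G T) B b y a <-> suff_att G B b y a.
Proof. by move=> h1 h2; rewrite /suff_att rho_restr. Qed.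

Lemma tol_restr T B b y a : B \in supp T -> y \in supp T ->
  tol_att (restr G T) B b y a <-> tol_att G B b y a.
Proof. by move=> h1 h2; rewrite /tol_att rho_restr. Qed.

Lemma weaken_restr T C c B b : C \in supp T -> B \in supp T ->
  weaken (restr G T) C c B b = weaken G C c B b.
Proof. by move=> h1 h2; rewrite /weaken rho_restr. Qed.

End Frame.

Section Att.
Variables (R : realType) (U : finType).

Lemma tol_needs_att (G : faf R U) C c B b x a : 0 <= c -> b <= 1 -> 0 <= frho G C B ->
  suff_att G B b x a -> tol_att G B (weaken G C c B b) x a -> 0 < frho G C B.
Proof.
move=> c0 b1 r0 [_ hs] [_ ht]; rewrite lt_neqAle r0 andbT; apply/negP => /eqP r.
move: ht; rewrite /weaken -r (min_r c0) subr0 (min_r b1); lra.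
Qed.

Lemma tol_suff (G : faf R U) C c B b x a : 0 <= c -> b <= 1 -> 0 <= frho G C B ->
  suff_att G B b x a -> tol_att G B (weaken G C c B b) x a -> suff_att G C c B b.
Proof.
move=> c0 b1 r0 hs ht; have hr := tol_needs_att c0 b1 r0 hs ht.
split => //; case: hs => _ hs; case: ht => _; rewrite /weaken.
move: hs; mm; lra.
Qed.

Lemma fpt_le (S S' : fz R U) x a : (S x <= S' x) -> fpt_in S x a -> fpt_in S' x a.
Proof. by move=> h [h1 [h2 h3]]; split => //; split => //; apply: le_trans h. Qed.

End Att.


Section Arith.
Variable R : realType.
Lemma arith1 (m l r b a : R) : Num.min (Num.min (1 - m) l) r + a <= 1 ->
  1 < Num.min l r + a -> l < b -> Num.min (Num.min (1 - m) b) r + a <= 1.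
Proof. mm; lra. Qed.
Lemma arith2 (l r a : R) : 1 < Num.min l r + a -> a <= 1 -> 0 < l.
Proof. mm; lra. Qed.
Lemma arith3 (f l b : R) : Num.min f (1 - l) < b -> b <= f -> 1 - l < b.
Proof. mm; lra. Qed.
End Arith.

Section Split.
Variables (R : realType) (U : finType).
Variable G : faf R U.
Hypothesis wf : WF G.
Variables (s : U) (E W : fz R U).
Local Notation S := (SCC G s).
Local Notation RR := (Rfz G S E).
Hypotheses (hE : fsub E (fA G)) (hW : fsub W (fA G))
  (hWE : forall z, z \notin supp S -> W z = E z)
  (hWR : forall z, z \in supp S -> W z <= RR z).

Lemma T_val z : fcap W S z = if z \in supp S then W z else 0.
Proof. exact: fcap_SCC. Qed.

Lemma fptT C c : fpt_in (fcap W S) C c -> [/\ C \in supp S, C \in supp RR & fpt_in W C c].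
Proof.
rewrite /fpt_in T_val; case: ifP => hC [c0 [c1 cT]]; last by move: (lt_le_trans c0 cT); rewrite ltxx.
split => //; rewrite supp_E; exact: lt_le_trans c0 (le_trans cT (hWR hC)).
Qed.

Lemma defsplit x a : x \in supp S -> 0 < a -> a <= 1 -> a <= RR x ->
  wdef G (fA G) W x a <->
  (wdef G (outparents G S) E x a /\ wdef (restr G RR) RR (fcap W S) x a).
Proof.
move=> hx a0 a1 aR.
have hxR : x \in supp RR by rewrite supp_E; exact: lt_le_trans a0 aR.
split.
- move=> hd; split.
  + move=> B b [b0 [b1 bop]] hs.
    have hB' : fpt_in (fA G) B b by split => //; split => //; apply: le_trans bop (op_le wf _ _).
    have [C [c [[c0 [c1 cW]] ht]]] := hd B b hB' hs.
    have hCB := tol_needs_att (ltW c0) b1 (wfr0 wf C B) hs ht.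
    have hop : 0 < outparents G S B by exact: lt_le_trans b0 bop.
    have hCS := upstream wf hop hCB.
    by exists C, c; split => //; split => //; split => //; rewrite -hWE.
  + move=> B b [b0 [b1 bR]] hs.
    have hBR : B \in supp RR by rewrite supp_E; exact: lt_le_trans b0 bR.
    have hBS := suppR hBR.
    move/(suff_restr _ _ _ hBR hxR): hs => hs.
    have hB' : fpt_in (fA G) B b by split => //; split => //; apply: le_trans bR (R_lefA wf _ _ _).
    have [C [c [[c0 [c1 cW]] ht]]] := hd B b hB' hs.
    have hCB := tol_needs_att (ltW c0) b1 (wfr0 wf C B) hs ht.
    case hCS: (C \in supp S).
    * have hCR : C \in supp RR.
        by rewrite supp_E; exact: lt_le_trans c0 (le_trans cW (hWR hCS)).
      exists C, c; split; first by split => //; split => //; rewrite T_val hCS.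
      by rewrite tol_restr // weaken_restr.
    * exfalso; move/negbT: hCS => hCS.
      have hL := L_ub wf hE hBS hCS hCB.
      have EC : W C = E C := hWE hCS.
      have hRB := R_in G E hBS.
      have bL : b <= 1 - Lfz G S E B.
        by move: bR; rewrite hRB le_min => /andP[].
      have m1 : Num.min c (frho G C B) <= Num.min (E C) (frho G C B).
        by apply: le_min2 => //; rewrite -EC.
      have wb : weaken G C c B b = b.
        rewrite /weaken min_r //; lra.
      by move: ht hs; rewrite wb => -[_ ht] [_ hs]; lra.
- move=> [hD hI] B b hB hs.
  have [b0 [b1 bA]] := hB.
  have hrBx : 0 < frho G B x by case: hs.
  case hBS: (B \in supp S).
  + case: (leP b (RR B)) => hbR.
    * have hBR : B \in supp RR by rewrite supp_E; exact: lt_le_trans b0 hbR.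
      have hs' : suff_att (restr G RR) B b x a by rewrite suff_restr.
      have [C [c [hC ht]]] := hI B b (conj b0 (conj b1 hbR)) hs'.
      have [hCS hCR hCW] := fptT hC.
      exists C, c; split => //.
      by move: ht; rewrite tol_restr // weaken_restr.
    * have hRB := R_in G E hBS.
      have hL1 : 1 - Lfz G S E B < b.
        by move: hbR; rewrite hRB => /arith3; apply.
      have hL0 : 0 < Lfz G S E B by lra.
      have [C0 [hC0S hC0B hop0 hLe]] := L_att hE hBS hL0.
      have hRB' : RR B = 1 - Lfz G S E B by rewrite hRB min_r //; lra.
      have hLC := L_le1 wf S E B.
      case: (leP (Num.min (1 - Lfz G S E B) (frho G B x) + a) 1) => hb0.
      -- exists C0, (E C0); split.
           have EC0 : 0 < E C0 by move: hL0; rewrite hLe lt_min => /andP[].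
           split => //; split; first exact: le_trans (proj2 (hE C0)) (wfA1 wf C0).
           by rewrite hWE.
         by split => //; rewrite /weaken -hLe (min_l (ltW hL1)).
      -- have hb00 : 0 < 1 - Lfz G S E B.
           exact: arith2 hb0 a1.
         have hBR : B \in supp RR by rewrite supp_E hRB'.
         have hs' : suff_att (restr G RR) B (1 - Lfz G S E B) x a.
           by rewrite suff_restr.
         have hf : fpt_in RR B (1 - Lfz G S E B).
           split => //; split; [lra | by rewrite hRB'].
         have [C [c [hC ht]]] := hI B _ hf hs'.
         have [hCS hCR hCW] := fptT hC.
         exists C, c; split => //.
         move: ht; rewrite tol_restr // weaken_restr // => -[_ ht]; split => //.
         exact: arith1 ht hb0 hL1.
  + move/negbT: hBS => hBS.
    have hopB := op_of wf hBS hx hrBx.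
    have hfB : fpt_in (outparents G S) B b by rewrite /fpt_in hopB.
    have [C [c [[c0 [c1 cE]] ht]]] := hD B b hfB hs.
    have hCB := tol_needs_att (ltW c0) b1 (wfr0 wf C B) hs ht.
    have hop : 0 < outparents G S B by rewrite hopB; exact: lt_le_trans b0 bA.
    have hCS := upstream wf hop hCB.
    by exists C, c; split => //; split => //; split => //; rewrite hWE.
Qed.

End Split.


Section Dec.
Variables (R : realType) (U : finType).
Variable G : faf R U.
Hypothesis wf : WF G.

Lemma D_char S E x a : 0 < a -> a <= 1 ->
  (a <= Dfz G S E x <-> (a <= Rfz G S E x /\ wdef G (outparents G S) E x a)).
Proof.
move=> a0 a1; apply: (union_char (P := fun A a => a <= Rfz G S E A /\ wdef G (outparents G S) E A a)) => //.
  exact: DC_and (@DC_le _ _ _) (@wdef_DC _ _ _ _ _).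
exact: LC_and (@LC_lef _ _ _) (@wdef_LC _ _ _ _ _).
Qed.

Lemma D_bounds S E x : 0 <= Dfz G S E x <= 1.
Proof. exact: union_bounds. Qed.

Lemma D_leR S E x : Dfz G S E x <= Rfz G S E x.
Proof.
apply: le_char; [exact: R_ge0 | by case/andP: (D_bounds S E x) |].
by move=> a a0 a1 /(D_char _ _ _ a0 a1) [].
Qed.

Lemma Fop_char C T x a : 0 < a -> a <= 1 ->
  (a <= Fop G C T x <-> (a <= C x /\ wdef G (fA G) T x a)).
Proof.
move=> a0 a1; apply: (union_char (P := fun A a => a <= C A /\ wdef G (fA G) T A a)) => //.
  exact: DC_and (@DC_le _ _ _) (@wdef_DC _ _ _ _ _).
exact: LC_and (@LC_lef _ _ _) (@wdef_LC _ _ _ _ _).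
Qed.

Lemma Fop_bounds C T x : 0 <= Fop G C T x <= 1.
Proof. exact: union_bounds. Qed.

Lemma def_R s E W x a : fsub E (fA G) -> conflict_free G E -> fsub W (fA G) ->
  (forall z, z \notin supp (SCC G s) -> W z = E z) ->
  x \in supp (SCC G s) -> 0 < a -> a <= 1 -> a <= fA G x ->
  wdef G (fA G) W x a -> a <= Rfz G (SCC G s) E x.
Proof.
move=> hE cf hW hWE hx a0 a1 aA hd.
rewrite R_in // le_min aA /=.
have [L0|L0] := leP (Lfz G (SCC G s) E x) 0.
  by have := L_ge0 G (SCC G s) E x; lra.
have [C0 [hC0S hC0x hop0 hLe]] := L_att hE hx L0.
rewrite lerBrDr; rewrite leNgt; apply/negP => hgt.
have EC0 : 0 < E C0 by move: L0; rewrite hLe lt_min => /andP[].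
have hf : fpt_in (fA G) C0 (E C0).
  split => //; split; [exact: le_trans (proj2 (hE C0)) (wfA1 wf C0) | exact: (proj2 (hE C0))].
have hs : suff_att G C0 (E C0) x a by split => //; rewrite -hLe addrC.
have [w [w' [[w0 [w1 wW]] ht]]] := hd C0 (E C0) hf hs.
have hs2 := tol_suff (ltW w0) (le_trans (proj2 (hE C0)) (wfA1 wf C0)) (wfr0 wf w C0) hs ht.
have hwS := upstream wf hop0 (proj1 hs2).
have EC1 : E C0 <= 1 := le_trans (proj2 (hE C0)) (wfA1 wf C0).
apply: cf; exists w, w', C0, (E C0); split.
  by split => //; split => //; rewrite -hWE.
by split => //; split => //; split => //.
Qed.

Definition sub S E := restr G (Rfz G S E).

Lemma fpt_cap E s z a : fsub E (fA G) -> fpt_in (fcap E (SCC G s)) z a ->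
  z \in supp (SCC G s) /\ fpt_in E z a.
Proof.
move=> hE; rewrite /fpt_in fcap_SCC //; case: ifP => // _ [a0 [_ h]].
by move: (lt_le_trans a0 h); rewrite ltxx.
Qed.

Lemma SCCS_self z : z \in args G -> SCCS G (SCC G z).
Proof. by move=> h; exists z. Qed.

Lemma in_own z : z \in args G -> 0 < fA G z -> z \in supp (SCC G z).
Proof. by move=> h1 h2; rewrite supp_SCC h1 peq_refl h2. Qed.

Lemma adm_piece_R s E : admissible G E -> forall z, z \in supp (SCC G s) ->
  E z <= Rfz G (SCC G s) E z.
Proof.
move=> [hE [cf hd]] z hz; apply: le_char; [exact: R_ge0 | exact: le_trans (proj2 (hE z)) (wfA1 wf z) |].
move=> a a0 a1 aE; apply: (def_R hE cf hE) => //.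
  exact: le_trans aE (proj2 (hE z)).
by apply: hd; split => //; split.
Qed.

Theorem AE_dec C E : fsub C (fA G) -> fsub E (fA G) ->
  (AEC G C E <-> forall S, SCCS G S ->
     AEC (sub S E) (fcap (Dfz G S E) C) (fcap E S)).
Proof.
move=> hC hE; split.
- move=> [[_ [cf hd]] hEC] S [s _ ->].
  have hWR := adm_piece_R (conj hE (conj cf hd)).
  have hWE : forall z, z \notin supp (SCC G s) -> E z = E z by [].
  have hcap := fun y => @fcap_SCC _ _ G wf E s y hE.
  have hsplit := defsplit wf hE hE hWE (hWR s).
  split; first split.
  + move=> z; rewrite hcap /=; case: ifP => hz; last by rewrite lexx R_ge0.
    by split; [case: (hE z) | apply: hWR].
  + split.
      move=> [A [a [B [b [hA [hB hs]]]]]].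
      have [hAS hA'] := fpt_cap hE hA; have [hBS hB'] := fpt_cap hE hB.
      have hAR : A \in supp (Rfz G (SCC G s) E).
        by rewrite supp_E; case: hA' => a0 [_ aE]; exact: lt_le_trans a0 (le_trans aE (hWR _ _ hAS)).
      have hBR : B \in supp (Rfz G (SCC G s) E).
        by rewrite supp_E; case: hB' => a0 [_ aE]; exact: lt_le_trans a0 (le_trans aE (hWR _ _ hBS)).
      move/(suff_restr _ _ _ hAR hBR): hs => hs.
      by apply: cf; exists A, a, B, b.
    move=> x a hx; have [hxS [a0 [a1 aE]]] := fpt_cap hE hx.
    have aR : a <= Rfz G (SCC G s) E x := le_trans aE (hWR _ _ hxS).
    by have [_ h2] := (hsplit x a hxS a0 a1 aR).1 (hd x a (conj a0 (conj a1 aE))).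
  + move=> z; rewrite hcap; case: ifP => hz.
      split; first by case: (hE z).
      rewrite /fcap le_min; apply/andP; split; last by case: (hEC z).
      apply: le_char; [by case/andP: (D_bounds (SCC G s) E z) | exact: le_trans (proj2 (hE z)) (wfA1 wf z) |].
      move=> a a0 a1 aE; have aR := le_trans aE (hWR _ _ hz).
      apply/(D_char _ _ _ a0 a1); split => //.
      by case: (hsplit z a hz a0 a1 aR) => h _; case: (h (hd z a (conj a0 (conj a1 aE)))).
    split => //; rewrite /fcap le_min; apply/andP; split; first by case/andP: (D_bounds (SCC G s) E z).
    by case: (hC z).
- move=> hP.
  have piece : forall z, 0 < E z -> [/\ z \in args G, z \in supp (SCC G z) &
       AEC (sub (SCC G z) E) (fcap (Dfz G (SCC G z) E) C) (fcap E (SCC G z))].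
    move=> z Ez; have za : z \in args G by apply: (wfAa wf); exact: lt_le_trans Ez (proj2 (hE z)).
    have zS : z \in supp (SCC G z) by apply: in_own => //; exact: lt_le_trans Ez (proj2 (hE z)).
    by split => //; apply: hP; apply: SCCS_self.
  have hcapv : forall s z, z \in supp (SCC G s) -> fcap E (SCC G s) z = E z.
    by move=> s z hz; rewrite fcap_SCC // hz.
  have hWR : forall s, SCCS G (SCC G s) -> forall z, z \in supp (SCC G s) -> E z <= Rfz G (SCC G s) E z.
    move=> s hs z hz; have [[hf _] _] := hP _ hs.
    by have [_ h] := hf z; rewrite hcapv in h.
  have hER : forall z, 0 < E z -> E z <= Rfz G (SCC G z) E z.
    move=> z Ez; have [za zS _] := piece z Ez; apply: hWR => //; exact: SCCS_self.
  split; first split => //; first split.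
  + move=> [A [a [B [b [[a0 [a1 aE]] [[b0 [b1 bE]] hs]]]]]].
    have EB : 0 < E B := lt_le_trans b0 bE.
    have [Ba BS [[hf [cf _]] _]] := piece B EB.
    case hAS: (A \in supp (SCC G B)).
    * have hAR : A \in supp (Rfz G (SCC G B) E).
        rewrite supp_E; apply: lt_le_trans a0 (le_trans aE _); apply: hWR hAS; exact: SCCS_self.
      have hBR : B \in supp (Rfz G (SCC G B) E).
        by rewrite supp_E; exact: lt_le_trans b0 (le_trans bE (hER B EB)).
      apply: cf; exists A, a, B, b; split; first by split => //; split => //; rewrite hcapv.
      split; first by split => //; split => //; rewrite hcapv.
      by rewrite /sub suff_restr.
    * move/negbT: hAS => hAS.
      have hr : 0 < frho G A B by case: hs.
      have hL := L_ub wf hE BS hAS hr.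
      have := hER B EB; rewrite R_in // le_min => /andP[_ hb].
      case: hs => _; move: hL hb; clear -aE bE; mm; lra.
  + move=> x a [a0 [a1 aE]].
    have Ex : 0 < E x := lt_le_trans a0 aE.
    have [xa xS [[hf [cf hd]] hsub]] := piece x Ex.
    have hfx : fpt_in (fcap E (SCC G x)) x a by split => //; split => //; rewrite hcapv.
    have hdx := hd x a hfx.
    have aD : a <= Dfz G (SCC G x) E x.
      by have [_ h] := hsub x; rewrite hcapv // /fcap le_min in h; case/andP: h => h _; exact: le_trans aE h.
    have [aR hout] := (D_char _ _ _ a0 a1).1 aD.
    have hWE : forall z, z \notin supp (SCC G x) -> E z = E z by [].
    have hsplit := defsplit wf hE hE hWE (hWR x (SCCS_self xa)).
    by apply/(hsplit x a xS a0 a1 aR); split.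
  + move=> z; split; first by case: (hE z).
    have [Ez|Ez] := leP (E z) 0; first by apply: le_trans Ez _; case: (hC z).
    have [za zS [_ hsub]] := piece z Ez.
    have [_ h] := hsub z; rewrite hcapv // /fcap le_min in h; by case/andP: h.
Qed.

End Dec.


Section Fuel.
Variables (R : realType) (U : finType).

Lemma nsingle_proper (G : faf R U) s : WF G -> ~ single (SCCS G) -> s \in args G ->
  exists2 y, y \in args G & y \notin supp (SCC G s).
Proof.
move=> wf ns sa; case: (pselect (exists2 y, y \in args G & y \notin supp (SCC G s))) => // hn.
exfalso; apply: ns; exists (SCC G s).
have all_in : forall y, y \in args G -> y \in supp (SCC G s).
  by move=> y ya; case: (boolP (y \in supp (SCC G s))) => // h; case: hn; exists y.
apply/seteqP; split => S' /=; last by move=> ->; exists s.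
case=> y ya ->; apply: funext => z; rewrite /SCC.
case: (boolP (z \in args G)) => za //=.
have := all_in y ya; have := all_in z za; rewrite !supp_SCC => /and3P[_ hsz _] /and3P[_ hsy _].
by rewrite hsz (peq_trans (peq_sym hsy) hsz).
Qed.

Lemma card_sub (G : faf R U) s E : WF G -> ~ single (SCCS G) -> s \in args G ->
  (#|supp (Rfz G (SCC G s) E)| < #|args G|)%N.
Proof.
move=> wf ns sa; apply: proper_card; rewrite properE; apply/andP; split.
  apply/fintype.subsetP => y /suppR; rewrite supp_SCC => /and3P[] //.
have [y ya yS] := nsingle_proper wf ns sa.
apply/negP => /fintype.subsetP /(_ y ya) /suppR; by rewrite (negbTE yS).
Qed.

Lemma sub_WF (G : faf R U) S E : WF G -> WF (restr G (Rfz G S E)).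
Proof.
move=> wf; apply: WF_restr => // x; rewrite R_ge0 //; exact: R_le1.
Qed.

Lemma sub_C (G : faf R U) S E C : WF G -> fsub C (fA G) ->
  fsub (fcap (Dfz G S E) C) (fA (restr G (Rfz G S E))).
Proof.
move=> wf hC x /=; rewrite /fcap; split.
  by rewrite le_min; case/andP: (D_bounds G S E x) => -> _; case: (hC x).
by rewrite ge_min D_leR.
Qed.

Variable BF : faf R U -> fz R U -> set (fz R U).
Variable Q : faf R U -> fz R U -> fz R U -> Prop.
Hypothesis hQf : forall G C E, WF G -> fsub C (fA G) -> Q G C E -> fsub E (fA G).
Hypothesis hBF : forall G C E, WF G -> fsub C (fA G) -> single (SCCS G) ->
  (BF G C E <-> Q G C E).
Hypothesis hdec : forall G C E, WF G -> fsub C (fA G) -> ~ single (SCCS G) -> fsub E (fA G) ->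
  (Q G C E <-> forall S, SCCS G S ->
     Q (restr G (Rfz G S E)) (fcap (Dfz G S E) C) (fcap E S)).

Lemma GFn_iff n : forall G C E, WF G -> fsub C (fA G) -> (#|args G| <= n)%N ->
  (GFn BF n G C E <-> Q G C E).
Proof.
elim: n => [|n IH] G C E wf hC hn /=.
- case: (pselect (single (SCCS G))) => sg.
    split; [by case=> _ [/(_ sg) /(hBF E wf hC sg)] | move=> hq].
    split; first exact: hQf hq.
    split; first by move=> _; apply/(hBF E wf hC sg).
    by move=> ns; case: (ns sg).
  have noS : forall S, ~ SCCS G S.
    move=> S [s sa _]; move: hn; rewrite leqn0 => /eqP/cards0_eq h.
    by move: sa; rewrite h inE.
  split.
    case=> hf _; apply/(hdec wf hC sg hf) => S /noS [].
  move=> hq; split; first exact: hQf hq.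
  by split => // _ S /noS.
- case: (pselect (single (SCCS G))) => sg.
    split; [by case=> _ [/(_ sg) /(hBF E wf hC sg)] | move=> hq].
    split; first exact: hQf hq.
    split; first by move=> _; apply/(hBF E wf hC sg).
    by move=> ns; case: (ns sg).
  have hsub : forall S, SCCS G S -> forall E',
     GFn BF n (restr G (Rfz G S E')) (fcap (Dfz G S E') C) (fcap E' S) <->
     Q (restr G (Rfz G S E')) (fcap (Dfz G S E') C) (fcap E' S).
    move=> S [s sa ->] E'; apply: IH.
    + exact: sub_WF.
    + exact: sub_C.
    + rewrite -ltnS; apply: leq_trans hn => /=; exact: card_sub.
  split.
    case=> hf [_ h]; apply/(hdec wf hC sg hf) => S hS.
    by apply/(hsub S hS); apply: h.
  move=> hq; have hf := hQf wf hC hq; split => //; split => // _ S hS.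
  by apply/(hsub S hS); move/(hdec wf hC sg hf): hq; apply.
Qed.

End Fuel.


Section CO.
Variables (R : realType) (U : finType).
Variable G : faf R U.
Hypothesis wf : WF G.

Theorem CO_dec C E : fsub C (fA G) -> fsub E (fA G) ->
  (CEC G C E <-> forall S, SCCS G S ->
     CEC (sub G S E) (fcap (Dfz G S E) C) (fcap E S)).
Proof.
move=> hC hE; split.
- move=> [hA hcomp] S hS; split; first by move: S hS; apply/(AE_dec wf hC hE).
  case: hS => s sa -> x a [a0 [a1 aDC]] hd.
  have aD : a <= Dfz G (SCC G s) E x by move: aDC; rewrite /fcap le_min => /andP[].
  have aC : a <= C x by move: aDC; rewrite /fcap le_min => /andP[].
  have [aR hout] := (D_char G _ _ _ a0 a1).1 aD.
  have hxS : x \in supp (SCC G s).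
    by apply: (@suppR _ _ G _ E); rewrite supp_E; exact: lt_le_trans a0 aR.
  have adm := hA.1.
  have hWE : forall z, z \notin supp (SCC G s) -> E z = E z by [].
  have hsplit := defsplit wf hE hE hWE (adm_piece_R wf (s:=s) adm).
  have hdG := (hsplit x a hxS a0 a1 aR).2 (conj hout hd).
  have [_ [_ h]] := hcomp x a (conj a0 (conj a1 aC)) hdG.
  by split => //; split => //; rewrite fcap_SCC // hxS.
- move=> hP; have hA : AEC G C E by apply/(AE_dec wf hC hE) => S hS; case: (hP S hS).
  split => // x a [a0 [a1 aC]] hd.
  have aA : a <= fA G x := le_trans aC (proj2 (hC x)).
  have xa : x \in args G by apply: (wfAa wf); exact: lt_le_trans a0 aA.
  have hxS : x \in supp (SCC G x) by apply: in_own => //; exact: lt_le_trans a0 aA.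
  have [[_ [cf _]] _] := hA.
  have aR : a <= Rfz G (SCC G x) E x by apply: (def_R wf hE cf hE) => //.
  have hWE : forall z, z \notin supp (SCC G x) -> E z = E z by [].
  have hsplit := defsplit wf hE hE hWE (adm_piece_R wf (s:=x) hA.1).
  have [hout hin] := (hsplit x a hxS a0 a1 aR).1 hd.
  have aD : a <= Dfz G (SCC G x) E x by apply/(D_char G _ _ _ a0 a1).
  have [_ hcomp] := hP _ (SCCS_self xa).
  have hf : fpt_in (fcap (Dfz G (SCC G x) E) C) x a.
    by split => //; split => //; rewrite /fcap le_min aD aC.
  by have [_ ] := fpt_cap wf hE (hcomp x a hf hin).
Qed.

End CO.


Section Up.
Variables (R : realType) (U : finType).
Variable G : faf R U.
Hypothesis wf : WF G.
Local Notation con := (connect (att_rel G)).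

Lemma up_ind (P : U -> Prop) :
  (forall y, (forall z, con z y -> ~~ con y z -> P z) -> P y) -> forall y, P y.
Proof.
move=> h.
have main : forall n y, (#|finset (fun w => con w y)| <= n)%N -> P y.
  elim=> [|n IH] y hn; apply: h => z hzy hyz; last first.
    apply: IH; rewrite -ltnS; apply: leq_trans hn; apply: proper_card.
    rewrite properE; apply/andP; split.
      by apply/fintype.subsetP => w; rewrite !inE => hw; exact: connect_trans hw hzy.
    apply/negP => /fintype.subsetP /(_ y); rewrite !inE => /(_ (connect0 _ _)).
    by move=> h0; move/negP: hyz; apply.
  exfalso; move: hn; rewrite leqn0 => /eqP h0.
  have := fintype.card0_eq h0 y; rewrite !inE => /negbT/negP; apply.
  exact: connect0.
by move=> y; apply: (main _ y (leqnn _)).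
Qed.

Lemma strict_up s B : 0 < outparents G (SCC G s) B -> con B s /\ ~~ con s B.
Proof.
move=> hop; have [hB hBS [u hu hBu] hopB] := op_pos hop.
have fB : 0 < fA G B by rewrite -hopB.
move: (hu); rewrite supp_SCC => /and3P[_ hsu _]; have [c1 c2] := peq_conn hsu.
have cBs : con B s by exact: connect_trans (connect1 (att_of wf hBu)) c2.
split => //; apply/negP => csB; move/negP: hBS; apply.
by rewrite supp_SCC hB fB (peq_of csB cBs).
Qed.

Lemma strict_up2 s B C : 0 < outparents G (SCC G s) B -> 0 < frho G C B ->
  con C s /\ ~~ con s C.
Proof.
move=> hop hCB; have [c1 c2] := strict_up hop.
have cCB := connect1 (att_of wf hCB).
split; first exact: connect_trans cCB c1.
by apply/negP => csC; move/negP: c2; apply; exact: connect_trans csC cCB.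
Qed.

Section Loc.
Variables (s : U) (E1 E2 : fz R U).
Hypotheses (h1 : fsub E1 (fA G)) (h2 : fsub E2 (fA G))
  (heq : forall z, con z s -> ~~ con s z -> E1 z = E2 z).

Lemma R_loc : Rfz G (SCC G s) E1 = Rfz G (SCC G s) E2.
Proof.
apply: funext => x; rewrite /Rfz /Lfz; case hx: (x \in supp (SCC G s)) => //; congr (Num.min _ (1 - _)).
apply: eq_bigr => B _; congr (Num.min _ _); rewrite /fcap.
have [hop|hop] := leP (outparents G (SCC G s) B) 0.
  have -> : outparents G (SCC G s) B = 0 by apply/eqP; rewrite eq_le hop op_ge0.
  by rewrite !min_r //; [case: (h2 B) | case: (h1 B)].
by have [c1 c2] := strict_up hop; rewrite heq.
Qed.

End Loc.

Lemma wdef_loc s E1 E2 x a : fsub E1 (fA G) ->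
  (forall z, con z s -> ~~ con s z -> E1 z = E2 z) ->
  wdef G (outparents G (SCC G s)) E1 x a -> wdef G (outparents G (SCC G s)) E2 x a.
Proof.
move=> h1 heq hd B b [b0 [b1 bop]] hs.
have [C [c [[c0 [c1 cE]] ht]]] := hd B b (conj b0 (conj b1 bop)) hs.
have hCB := tol_needs_att (ltW c0) b1 (wfr0 wf C B) hs ht.
have [u1 u2] := strict_up2 (lt_le_trans b0 bop) hCB.
by exists C, c; split => //; split => //; split => //; rewrite -heq.
Qed.

Lemma D_loc s E1 E2 : fsub E1 (fA G) -> fsub E2 (fA G) ->
  (forall z, con z s -> ~~ con s z -> E1 z = E2 z) ->
  Dfz G (SCC G s) E1 = Dfz G (SCC G s) E2.
Proof.
move=> h1 h2 heq; apply: funext => x.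
apply: eq_char; try exact: D_bounds.
move=> a a0 a1; rewrite !(D_char G _ _ _ a0 a1) (R_loc h1 h2 heq).
split => -[h h']; split => //; first exact: wdef_loc h'.
by apply: (wdef_loc h2) h' => z c1 c2; rewrite heq.
Qed.

End Up.


Section PE.
Variables (R : realType) (U : finType).
Variable G : faf R U.
Hypothesis wf : WF G.

Section Ext.
Variables (s : U) (C E E' : fz R U).
Local Notation S := (SCC G s).
Local Notation RR := (Rfz G S E).
Hypotheses (hC : fsub C (fA G)) (hE : fsub E (fA G)) (hA : AEC G C E)
  (hA' : AEC (sub G S E) (fcap (Dfz G S E) C) E') (hle : fle (fcap E S) E').

Definition Est z := Num.max (E z) (E' z).

Lemma E'R z : 0 <= E' z /\ E' z <= RR z.
Proof. by case: hA' => -[h _] _; apply: h. Qed.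

Lemma E'_out z : z \notin supp S -> E' z = 0.
Proof.
move=> hz; have [h1 h2] := E'R z; apply/eqP; rewrite eq_le h1 andbT.
by rewrite (R_out G E hz) in h2.
Qed.

Lemma Est_out z : z \notin supp S -> Est z = E z.
Proof. by move=> hz; rewrite /Est E'_out // max_l //; case: (hE z). Qed.

Lemma Est_in z : z \in supp S -> Est z = E' z.
Proof. by move=> hz; rewrite /Est max_r //; have := hle z; rewrite fcap_SCC // hz. Qed.

Lemma Est_sub : fsub Est (fA G).
Proof.
move=> z; case: (boolP (z \in supp S)) => hz; last by rewrite Est_out //; apply: hE.
rewrite Est_in //; have [h1 h2] := E'R z; split => //; exact: le_trans h2 (R_lefA wf _ _ _).
Qed.

Lemma capEst : fcap Est S = E'.
Proof.
apply: funext => z; rewrite (fcap_SCC wf s z Est_sub); case: ifP => hz; first exact: Est_in.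
by rewrite E'_out // hz.
Qed.

Lemma Est_AEC : AEC G C Est.
Proof.
have [[_ [cf hd]] hEC] := hA.
have [[hf' [cf' hd']] hsub'] := hA'.
have hEsub := Est_sub.
have fptS : forall z c, z \in supp S -> fpt_in Est z c -> fpt_in E' z c.
  by move=> z c hz; rewrite /fpt_in Est_in.
have fptO : forall z c, z \notin supp S -> fpt_in Est z c -> fpt_in E z c.
  by move=> z c hz; rewrite /fpt_in Est_out.
have inR : forall z c, fpt_in E' z c -> z \in supp RR.
  by move=> z c [c0 [_ h]]; rewrite supp_E; apply: lt_le_trans c0 (le_trans h _); case: (E'R z).
have ES : forall z c, z \in supp S -> fpt_in E z c -> fpt_in E' z c.
  move=> z c hz [c0 [c1 h]]; split => //; split => //; apply: le_trans h _.
  by have := hle z; rewrite fcap_SCC // hz.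
have cf'G : forall p a q b, fpt_in E' p a -> fpt_in E' q b -> ~ suff_att G p a q b.
  move=> p a q b hp hq hs; apply: cf'; exists p, a, q, b; split => //; split => //.
  by apply/suff_restr => //; [exact: inR hp | exact: inR hq].
have noatt : forall p a q b, p \notin supp S -> q \in supp S -> fpt_in E p a ->
    fpt_in E' q b -> ~ suff_att G p a q b.
  move=> p a q b hp hq [a0 [a1 aE]] [b0 [b1 bE]] [hr hs].
  have hL := L_ub wf hE hq hp hr.
  have := E'R q; rewrite R_in // => -[_]; rewrite le_min => /andP[_ hb].
  move: hs hL hb; clear -aE bE; mm; lra.
split; first split => //; first split.
- move=> [p [a [q [b [hp [hq hs]]]]]].
  case: (boolP (p \in supp S)) => hpS; case: (boolP (q \in supp S)) => hqS.
  + exact: cf'G (fptS _ _ hpS hp) (fptS _ _ hqS hq) hs.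
  + (* p in S (from E'), q outside (from E) : E defends q *)
    have hp' := fptS _ _ hpS hp; have hq' := fptO _ _ hqS hq.
    have hpA : fpt_in (fA G) p a.
      case: (hp') => a0 [a1 h]; split => //; split => //; apply: le_trans h _.
      by case: (E'R p) => _ h'; exact: le_trans h' (R_lefA wf _ _ _).
    have [w [w' [hw ht]]] := hd q b hq' p a hpA hs.
    have hs2 := tol_suff (ltW (proj1 hw)) (proj1 (proj2 hp')) (wfr0 wf w p) hs ht.
    case: (boolP (w \in supp S)) => hwS.
      exact: cf'G (ES _ _ hwS hw) hp' hs2.
    exact: noatt hwS hpS hw hp' hs2.
  + exact: noatt hpS hqS (fptO _ _ hpS hp) (fptS _ _ hqS hq) hs.
  + by apply: cf; exists p, a, q, b; split; [exact: fptO | split; [exact: fptO|]].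
- move=> x a hx; case: (boolP (x \in supp S)) => hxS; last first.
    by apply: (wdef_mono (T := E)) => [z|]; [rewrite /Est le_max lexx | apply: hd; exact: fptO].
  have hx' := fptS _ _ hxS hx; have [a0 [a1 aE']] := hx'.
  have aD : a <= Dfz G S E x.
    by have [_ h] := hsub' x; move: (le_trans aE' h); rewrite /fcap le_min => /andP[].
  have [aR hout] := (D_char G _ _ _ a0 a1).1 aD.
  have hWR : forall z, z \in supp S -> Est z <= RR z by move=> z hz; rewrite Est_in //; case: (E'R z).
  have hsplit := defsplit wf hE hEsub Est_out hWR.
  apply/(hsplit x a hxS a0 a1 aR); split => //; rewrite capEst; exact: hd'.
- move=> z; split; first by case: (hEsub z).
  rewrite /Est ge_max; apply/andP; split; first by case: (hEC z).
  by have [_ h] := hsub' z; apply: le_trans h _; rewrite /fcap ge_min lexx orbT.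
Qed.

End Ext.

Theorem PE_dec C E : fsub C (fA G) -> fsub E (fA G) ->
  (PEC G C E <-> forall S, SCCS G S ->
     PEC (sub G S E) (fcap (Dfz G S E) C) (fcap E S)).
Proof.
move=> hC hE; split.
- move=> [hA hmax] S hS; split; first by move: S hS; apply/(AE_dec wf hC hE).
  case: hS => s sa -> E' hA' hle.
  have hAst := Est_AEC hE hA hA' hle.
  have hf : fle E (Est E E') by move=> z; rewrite /Est le_max lexx.
  have eq := hmax _ hAst hf.
  apply: funext => z; rewrite fcap_SCC //; case: ifP => hz.
    by rewrite -(Est_in hE hle hz) eq.
  by rewrite (E'_out hA') ?hz.
- move=> hP.
  have hA : AEC G C E by apply/(AE_dec wf hC hE) => S hS; case: (hP S hS).
  split => // E' hA' hle.
  have hE' : fsub E' (fA G) by case: hA' => -[].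
  apply: funext; apply: (up_ind (G := G)) => y IH.
  have [fy|fy] := leP (fA G y) 0.
    have h1 := hE y; have h2 := hE' y.
    apply/eqP; rewrite eq_le; apply/andP; split.
      by apply: le_trans (proj2 h2) (le_trans fy (proj1 h1)).
    by apply: le_trans (proj2 h1) (le_trans fy (proj1 h2)).
  have ya : y \in args G by exact: (wfAa wf).
  have yS : y \in supp (SCC G y) by exact: in_own.
  have hR := R_loc wf hE' hE IH.
  have hD := D_loc wf hE' hE IH.
  have pE' := (AE_dec wf hC hE').1 hA' _ (SCCS_self ya).
  rewrite /sub hR hD in pE'.
  have [_ hmaxS] := hP _ (SCCS_self ya).
  have eq := hmaxS _ pE' (fun z => le_min2 (hle z) (lexx _)).
  by have := congr1 (fun f => f y) eq; rewrite /= !fcap_SCC // yS.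
Qed.

End PE.


Section GR.
Variables (R : realType) (U : finType).
Variable G : faf R U.
Hypothesis wf : WF G.
Variable C : fz R U.
Hypothesis hC : fsub C (fA G).

Lemma Fop_mono T T' : fle T T' -> fle (Fop G C T) (Fop G C T').
Proof.
move=> hT x; apply: le_char; [by case/andP: (Fop_bounds G C T' x) | by case/andP: (Fop_bounds G C T x)|].
move=> a a0 a1 /(Fop_char _ _ _ _ a0 a1) [aC hd]; apply/(Fop_char _ _ _ _ a0 a1); split => //.
exact: wdef_mono hd.
Qed.

Lemma Fop_leC T : fle (Fop G C T) C.
Proof.
move=> x; apply: le_char; [by case: (hC x) | by case/andP: (Fop_bounds G C T x)|].
by move=> a a0 a1 /(Fop_char _ _ _ _ a0 a1) [].
Qed.

Definition Pre V := (forall x, 0 <= V x) /\ fle (Fop G C V) V.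

Lemma KT : exists W, Fop G C W = W /\ forall V, Pre V -> fle W V.
Proof.
pose W x := inf [set y | exists2 V, Pre V & y = V x].
have ne : forall x, [set y | exists2 V, Pre V & y = V x] !=set0.
  move=> x; exists 1, (fun _ => 1) => //; split => [z|z]; first exact: ler01.
  by case/andP: (Fop_bounds G C (fun _ => 1) z).
have lb : forall x, has_lbound [set y | exists2 V, Pre V & y = V x].
  by move=> x; exists 0 => y [V [hV _] ->].
have Wle : forall V, Pre V -> fle W V.
  by move=> V hV x; apply: ge_inf => //; exists V.
have W0 : forall x, 0 <= W x.
  by move=> x; apply: lb_le_inf => // y [V [hV _] ->].
have FW : fle (Fop G C W) W.
  move=> x; apply: lb_le_inf => // y [V hV ->].
  exact: le_trans (Fop_mono (Wle V hV) x) (proj2 hV x).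
have PFW : Pre (Fop G C W).
  split; first by move=> x; case/andP: (Fop_bounds G C W x).
  exact: Fop_mono FW.
exists W; split => //; apply: funext => x; apply/eqP; rewrite eq_le FW /=.
exact: Wle PFW x.
Qed.

Lemma lfp_ex : exists X, GEset G C X.
Proof.
have [W [hW hmin]] := KT; exists W; split => // Y hY; apply: hmin; split.
  by move=> x; rewrite -hY; case/andP: (Fop_bounds G C Y x).
by rewrite hY => x.
Qed.

Lemma lfp_pre X V : GEset G C X -> Pre V -> fle X V.
Proof.
move=> [hX hmin] hV; have [W [hW hWm]] := KT.
move=> x; exact: le_trans (hmin W hW x) (hWm V hV x).
Qed.

Lemma lfp_uniq X Y : GEset G C X -> GEset G C Y -> X = Y.
Proof.
move=> [hX mX] [hY mY]; apply: funext => x; apply/eqP; rewrite eq_le.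
by rewrite (mX Y hY x) (mY X hX x).
Qed.

Lemma lfp_sub X : GEset G C X -> fsub X C.
Proof.
move=> [hX _] x; rewrite -hX; split; first by case/andP: (Fop_bounds G C X x).
exact: Fop_leC.
Qed.

Lemma lfp_subA X : GEset G C X -> fsub X (fA G).
Proof.
move=> hX x; have [h1 h2] := lfp_sub hX x; split => //; exact: le_trans h2 (proj2 (hC x)).
Qed.

Definition NA X x a := forall B b, fpt_in X B b -> ~ suff_att G B b x a.

Lemma NA_DC X : DC (NA X).
Proof.
move=> x a a' a0 aa h B b hB [hr hs]; apply: (h B b hB); split => //; lra.
Qed.

Lemma NA_LC X : LC (NA X).
Proof.
move=> x a a0 a1 h B b hB [hr hs].
pose e := Num.min (Num.min b (frho G B x) + a - 1) a.
have e0 : 0 < e by rewrite /e lt_min a0 andbT; lra.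
have ea : e <= a by rewrite /e ge_min lexx orbT.
have e1 : e <= Num.min b (frho G B x) + a - 1 by rewrite /e ge_min lexx.
apply: (h (a - e / 2) ltac:(lra) ltac:(lra) B b hB); split => //; lra.
Qed.

Lemma lfp_adm X : GEset G C X -> AEC G C X.
Proof.
move=> hX; have hXA := lfp_subA hX; have hXC := lfp_sub hX.
have [fX _] := hX.
have defX : forall x a, fpt_in X x a -> wdef G (fA G) X x a.
  move=> x a [a0 [a1 aX]]; rewrite -fX in aX.
  by case/(Fop_char _ _ _ _ a0 a1): aX.
split => //; split => //; split => //.
pose Z := fz_union (fun x a => a <= X x /\ NA X x a).
have Zc : forall x a, 0 < a -> a <= 1 -> (a <= Z x <-> (a <= X x /\ NA X x a)).
  move=> x a a0 a1; apply: union_char => //.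
    exact: DC_and (@DC_le _ _ _) (@NA_DC X).
  exact: LC_and (@LC_lef _ _ _) (@NA_LC X).
have Zb : forall x, 0 <= Z x <= 1 by move=> x; exact: union_bounds.
have ZX : fle Z X.
  move=> x; apply: le_char; [by case: (hXA x) | by case/andP: (Zb x) |].
  by move=> a a0 a1 /(Zc _ _ a0 a1) [].
have hZ : Pre Z.
  split; first by move=> x; case/andP: (Zb x).
  move=> x; apply: le_char; [by case/andP: (Zb x) | by case/andP: (Fop_bounds G C Z x) |].
  move=> a a0 a1 ha; apply/(Zc _ _ a0 a1).
  have [aC hd] := (Fop_char _ _ _ _ a0 a1).1 ha.
  split; first by rewrite -fX; exact: le_trans ha (Fop_mono ZX x).
  move=> B b hB hs.
  have hBA : fpt_in (fA G) B b by apply: fpt_le hB; case: (hXA B).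
  have [c [c' [hc ht]]] := hd B b hBA hs.
  have [c0 [c1 cZ]] := hc.
  have hs2 := tol_suff (ltW c0) (proj1 (proj2 hB)) (wfr0 wf c B) hs ht.
  have hcA : fpt_in (fA G) c c'.
    by split => //; split => //; apply: le_trans cZ (le_trans (ZX c) (proj2 (hXA c))).
  have [d [d' [hdd ht2]]] := defX B b hB c c' hcA hs2.
  have hs3 := tol_suff (ltW (proj1 hdd)) c1 (wfr0 wf d c) hs2 ht2.
  have [_ hNA] := (Zc _ _ c0 c1).1 cZ.
  exact: hNA d d' hdd hs3.
have XZ := lfp_pre hX hZ.
move=> [p [a [q [b [hp [[b0 [b1 bX]] hs]]]]]].
have [_ hNA] := (Zc _ _ b0 b1).1 (le_trans bX (XZ q)).
exact: hNA p a hp hs.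
Qed.

End GR.


Section GRdec.
Variables (R : realType) (U : finType).
Variable G : faf R U.
Hypothesis wf : WF G.
Variable C : fz R U.
Hypothesis hC : fsub C (fA G).

Lemma GR_piece X s : GEset G C X ->
  GEset (sub G (SCC G s) X) (fcap (Dfz G (SCC G s) X) C) (fcap X (SCC G s)).
Proof.
move=> hX.
have hA := lfp_adm wf hC hX; have hXA := lfp_subA hC hX.
have [fX mX] := hX.
set S := SCC G s; set RR := Rfz G S X; set C' := fcap (Dfz G S X) C.
have hWR : forall z, z \in supp S -> X z <= RR z := adm_piece_R wf (s:=s) hA.1.
have hWE : forall z, z \notin supp S -> X z = X z by [].
have hsplit := defsplit wf hXA hXA hWE hWR.
have T0v : forall z, fcap X S z = if z \in supp S then X z else 0 := fun z => fcap_SCC wf s z hXA.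
have Fsub_char : forall T x a, 0 < a -> a <= 1 ->
    (a <= Fop (sub G S X) C' T x <-> (a <= C' x /\ wdef (restr G RR) RR T x a)).
  by move=> T x a a0 a1; exact: Fop_char.
have C'D : forall x a, a <= C' x -> a <= Dfz G S X x /\ a <= C x.
  by move=> x a; rewrite /C' /fcap le_min => /andP[].
split.
- apply: funext => x; apply: eq_char; first exact: Fop_bounds.
    rewrite T0v; case: ifP => _; last by rewrite lexx ler01.
    by case: (hXA x) => h1 h2; rewrite h1 (le_trans h2 (wfA1 wf x)).
  move=> a a0 a1; rewrite Fsub_char // T0v; split.
  + move=> [/C'D [aD aC] hin].
    have [aR hout] := (D_char G _ _ _ a0 a1).1 aD.
    have hxS : x \in supp S by apply: (@suppR _ _ G _ X); rewrite supp_E; exact: lt_le_trans a0 aR.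
    rewrite hxS -fX; apply/(Fop_char _ _ _ _ a0 a1); split => //.
    exact: (hsplit x a hxS a0 a1 aR).2.
  + case: ifP => hxS; last by move=> h; move: (lt_le_trans a0 h); rewrite ltxx.
    rewrite -{1}fX => /(Fop_char _ _ _ _ a0 a1) [aC hd].
    have aR : a <= RR x.
      by apply: le_trans (hWR x hxS); rewrite -fX; apply/(Fop_char _ _ _ _ a0 a1).
    have [hout hin] := (hsplit x a hxS a0 a1 aR).1 hd.
    split => //; rewrite /C' /fcap le_min aC andbT.
    by apply/(D_char G _ _ _ a0 a1).
- move=> Y hY.
  have Yb : forall z, 0 <= Y z <= 1 by move=> z; rewrite -hY; exact: Fop_bounds.
  have YR : forall z, Y z <= RR z.
    move=> z; apply: le_char; [exact: R_ge0 | by case/andP: (Yb z) |].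
    move=> a a0 a1; rewrite -hY => /(Fsub_char _ _ _ a0 a1) [/C'D [aD _] _].
    by case: ((D_char G _ _ _ a0 a1).1 aD).
  pose Z z := if z \in supp S then Num.min (X z) (Y z) else X z.
  have ZX : fle Z X by move=> z; rewrite /Z; case: ifP => _; rewrite ?ge_min lexx.
  have Z0 : forall z, 0 <= Z z.
    move=> z; rewrite /Z; case: ifP => _; last by case: (hXA z).
    by rewrite le_min; case: (hXA z) => -> _; case/andP: (Yb z).
  have hZA : fsub Z (fA G) by move=> z; split => //; exact: le_trans (ZX z) (proj2 (hXA z)).
  have hZE : forall z, z \notin supp S -> Z z = X z by move=> z hz; rewrite /Z (negbTE hz).
  have hZR : forall z, z \in supp S -> Z z <= RR z.
    by move=> z hz; rewrite /Z hz; apply: le_trans (YR z); rewrite ge_min lexx orbT.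
  have hsplitZ := defsplit wf hXA hZA hZE hZR.
  have capZY : fle (fcap Z S) Y.
    move=> z; rewrite (fcap_SCC wf s z hZA); case: ifP => hz; last by case/andP: (Yb z).
    by rewrite /Z hz ge_min lexx orbT.
  have hZ : Pre G C Z.
    split => // x; apply: le_char => //; first by case/andP: (Fop_bounds G C Z x).
    move=> a a0 a1 ha.
    have aX : a <= X x by rewrite -fX; exact: le_trans ha (Fop_mono G C ZX x).
    have [aC hd] := (Fop_char _ _ _ _ a0 a1).1 ha.
    rewrite /Z; case: ifP => hxS //; rewrite le_min aX /=.
    have aA : a <= fA G x := le_trans aC (proj2 (hC x)).
    have aR : a <= RR x by apply: (def_R wf hXA hA.1.2.1 hZA hZE) => //.
    have [hout hin] := (hsplitZ x a hxS a0 a1 aR).1 hd.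
    have aD : a <= Dfz G S X x by apply/(D_char G _ _ _ a0 a1).
    rewrite -hY; apply/(Fsub_char _ _ _ a0 a1); split.
      by rewrite /C' /fcap le_min aD aC.
    exact: wdef_mono capZY hin.
  have XZ := lfp_pre hX hZ.
  move=> z; rewrite T0v; case: ifP => hz; last by case/andP: (Yb z).
  by apply: le_trans (XZ z) _; rewrite /Z hz ge_min lexx orbT.
Qed.

Theorem GR_dec E : fsub E (fA G) ->
  (GEset G C E <-> forall S, SCCS G S ->
     GEset (sub G S E) (fcap (Dfz G S E) C) (fcap E S)).
Proof.
move=> hE; split; first by move=> hX S [s _ ->]; exact: GR_piece.
move=> hP; have [X0 hX0] := lfp_ex G C.
have hX0A := lfp_subA hC hX0.
suff -> : E = X0 by [].
apply: funext; apply: (up_ind (G := G)) => y IH.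
have [fy|fy] := leP (fA G y) 0.
  have h1 := hE y; have h2 := hX0A y.
  apply/eqP; rewrite eq_le; apply/andP; split.
    by apply: le_trans (proj2 h1) (le_trans fy (proj1 h2)).
  by apply: le_trans (proj2 h2) (le_trans fy (proj1 h1)).
have ya : y \in args G by exact: (wfAa wf).
have yS : y \in supp (SCC G y) by exact: in_own.
have hR := R_loc wf hE hX0A IH.
have hD := D_loc wf hE hX0A IH.
have pE := hP _ (SCCS_self ya).
rewrite /sub hR hD in pE.
have pX := GR_piece y hX0.
have eq := lfp_uniq pE pX.
by have := congr1 (fun f => f y) eq; rewrite /= !fcap_SCC // yS.
Qed.

End GRdec.


Section Final.
Variables (R : realType) (U : finType).

Lemma GF_gen (BF : faf R U -> fz R U -> set (fz R U)) (Q : faf R U -> fz R U -> fz R U -> Prop) :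
  (forall G C E, WF G -> fsub C (fA G) -> Q G C E -> fsub E (fA G)) ->
  (forall G C E, WF G -> fsub C (fA G) -> single (SCCS G) -> (BF G C E <-> Q G C E)) ->
  (forall G C E, WF G -> fsub C (fA G) -> ~ single (SCCS G) -> fsub E (fA G) ->
    (Q G C E <-> forall S, SCCS G S ->
       Q (restr G (Rfz G S E)) (fcap (Dfz G S E) C) (fcap E S))) ->
  forall G C, WF G -> fsub C (fA G) -> Q G C = GF BF G C.
Proof.
move=> h1 h2 h3 G C wf hC; rewrite /GF; apply/seteqP; split => E /= h.
  by apply/(GFn_iff h1 h2 h3 E wf hC (leqnn _)).
by apply/(GFn_iff h1 h2 h3 E wf hC (leqnn _)).
Qed.

Lemma GF_AE (G : faf R U) C : WF G -> fsub C (fA G) -> AEC G C = GF (@BF_AE R U) G C.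
Proof.
apply: GF_gen => //.
- by move=> G' C' E' _ _ [[]].
- by move=> G' C' E' wf' hC' _ hE'; exact: AE_dec.
Qed.

Lemma GF_CO (G : faf R U) C : WF G -> fsub C (fA G) -> CEC G C = GF (@BF_CO R U) G C.
Proof.
apply: GF_gen => //.
- by move=> G' C' E' _ _ [[[]]].
- by move=> G' C' E' wf' hC' _ hE'; exact: CO_dec.
Qed.

Lemma GF_PE (G : faf R U) C : WF G -> fsub C (fA G) -> PEC G C = GF (@BF_PE R U) G C.
Proof.
apply: GF_gen => //.
- by move=> G' C' E' _ _ [[[]]].
- by move=> G' C' E' wf' hC' _ hE'; exact: PE_dec.
Qed.

Lemma GF_GR (G : faf R U) C : WF G -> fsub C (fA G) -> GEset G C = GF (@BF_GR R U) G C.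
Proof.
apply: GF_gen => //.
- by move=> G' C' E' _ hC' hE'; exact: lfp_subA hE'.
- by move=> G' C' E' wf' hC' _ hE'; exact: GR_dec.
Qed.

End Final.

Unset Implicit Arguments.
Set Strict Implicit.

Theorem mainTheorem8 (R : realType) (T : finType) (A : T -> R) (rho : T -> T -> R)
  (hA : forall x, 0 <= A x <= 1) (hrho : forall x y, 0 <= rho x y <= 1) :
  let F := MkFAF [set: T] A rho in
  AE F = GF (@BF_AE R T) F A /\
  CEC F A = GF (@BF_CO R T) F A /\
  PEC F A = GF (@BF_PE R T) F A /\
  GEset F A = GF (@BF_GR R T) F A.
Proof.
move=> F.
have wf : WF F.
  split => /=.
  - by move=> x; case/andP: (hA x).
  - by move=> x; case/andP: (hA x).
  - by move=> x y; case/andP: (hrho x y).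
  - by move=> x y; case/andP: (hrho x y).
  - by move=> x _; apply: finset.in_setT.
  - by move=> x y _; rewrite /= !finset.in_setT.
have hC : fsub A (fA F) by move=> x /=; case/andP: (hA x) => -> _.
split; last split; last split.
- rewrite -GF_AE //; apply/seteqP; split => E /=.
    by move=> h; split => //; case: h.
  by case.
- exact: GF_CO.
- exact: GF_PE.
- exact: GF_GR.
Qed.
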